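(* Fix a leader policy $\pi$ and functions $\tilde Q_h:\mathcal S\times\mathcal B\to\mathbb R$, $h\in[H]$; let $\tilde V_h(s)=\eta^{-1}\log\sum_be^{\eta\tilde Q_h(s,b)}$, $\tilde A_h=\tilde Q_h-\tilde V_h$, $\tilde\nu_h(b\mid s)=\exp(\eta\tilde A_h(s,b))$, $\tilde V_{H+1}=0$. Define $$\Delta_h^{(1)}(s_h,b_h)=\mathbb E_{s_h,b_h}\Bigl[\sum_{i=h}^H\gamma^{i-h}\bigl(r_i^\pi+\gamma P_i^\pi\tilde V_{i+1}-\tilde Q_i\bigr)(s_i,b_i)\Bigr],\qquad \Delta_h^{(2)}(s_h)=\mathbb E_{s_h}\Bigl[\sum_{i=h}^H\gamma^{i-h}\mathrm{KL}\bigl(\nu_i^\pi(\cdot\mid s_i)\,\|\,\tilde\nu_i(\cdot\mid s_i)\bigr)\Bigr],$$ with $\Delta^{(2)}_{H+1}=0$. Then for all $h\in[H]$ and $(s_h,b_h)\in\mathcal S\times\mathcal B$, $$A_h^\pi(s_h,b_h)-\tilde A_h(s_h,b_h)=(\mathbb E_{s_h,b_h}-\mathbb E_{s_h})\bigl[\Delta_h^{(1)}(s_h,b_h)-\gamma\eta^{-1}\Delta_{h+1}^{(2)}(s_{h+1})\bigr]+\eta^{-1}\mathrm{KL}\bigl(\nu_h^\pi(\cdot\mid s_h)\,\|\,\tilde\nu_h(\cdot\mid s_h)\bigr),$$ where $\mathrm{KL}(\nu_h^\pi(\cdot\mid s_h)\|\tilde\nu_h(\cdot\mid s_h))=\eta\,\mathbb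 E_{s_h}[A_h^\pi-\tilde A_h]$. In particular, in the myopic case ($\gamma=0$, $\tilde Q_h=\tilde r_h^\pi$ for some estimated reward $\tilde r$ with $\tilde r_h^\pi(s,b)=\sum_a\pi_h(a\mid s,b)\tilde r_h(s,a,b)$), $$A_h^\pi(s_h,b_h)-\tilde A_h(s_h,b_h)=(\mathbb E_{s_h,b_h}-\mathbb E_{s_h})\bigl[(r_h^\pi-\tilde r_h^\pi)(s_h,b_h)\bigr]+\eta^{-1}\mathrm{KL}\bigl(\nu_h^\pi(\cdot\mid s_h)\|\tilde\nu_h(\cdot\mid s_h)\bigr).$$
   Context: Episodic leader–follower Markov game (true model): state space $\mathcal S$, actions $\mathcal A,\mathcal B$, horizon $H$, transitions $P_h(\cdot\mid s,a,b)$, follower rewards $r_h$. Leader policy $\pi_h(\cdot\mid s,b)\in\Delta(\mathcal A)$; $r_h^\pi(s,b)=\sum_a\pi_h(a\mid s,b)r_h(s,a,b)$, $P_h^\pi(s'\mid s,b)=\sum_a\pi_h(a\mid s,b)P_h(s'\mid s,a,b)$. With $\eta>0$, $\gamma\in[0,1]$: $V_{H+1}^\pi=0$, $Q_h^\pi=r_h^\pi+\gamma P_h^\pi V_{h+1}^\pi$, $V_h^\pi(s)=\eta^{-1}\log\sum_be^{\eta Q_h^\pi(s,b)}$, $A_h^\pi=Q_h^\pi-V_h^\pi$, $\nu_h^\pi(b\mid s)=\exp(\eta A_h^\pi(s,b))$. $\mathbb E_{s_h}$, $\mathbb E_{s_h,b_h}$: conditional expectations given $s_h$, resp. $(s_h,b_h)$,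 over a trajectory of $(\pi,\nu^\pi)$ on the true model ($b_l\sim\nu_l^\pi(\cdot\mid s_l)$, $a_l\sim\pi_l(\cdot\mid s_l,b_l)$, $s_{l+1}\sim P_l$); in particular $\mathbb E_{s_h}$ also averages over $b_h\sim\nu_h^\pi(\cdot\mid s_h)$. *)

(* Defs.v *)
From HB Require Import structures.
From mathcomp Require Import all_boot all_order all_algebra.
From mathcomp Require Import reals sequences exp.
Set Implicit Arguments. Unset Strict Implicit. Unset Printing Implicit Defensive.
Import Order.TTheory GRing.Theory Num.Theory.
Local Open Scope ring_scope.

Section LeaderFollower.
Variables (R : realType) (S A B : finType) (H : nat).
(* transitions P h s a b s', follower rewards r h s a b, leader policy pi h s b a *)
Variables (P : nat -> S -> A -> B -> S -> R) (r : nat -> S -> A -> B -> R)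
          (pi : nat -> S -> B -> A -> R) (eta gamma : R).

Definition rew_pi (rr : nat -> S -> A -> B -> R) (h : nat) (s : S) (b : B) : R :=
  \sum_a pi h s b a * rr h s a b.

Definition rpi := rew_pi r.

Definition Ppi (h : nat) (s : S) (b : B) (s' : S) : R :=
  \sum_a pi h s b a * P h s a b s'.

Definition PV (h : nat) (V : S -> R) (s : S) (b : B) : R :=
  \sum_s' Ppi h s b s' * V s'.

Definition softV (q : B -> R) : R := ln (\sum_b expR (eta * q b)) / eta.

(* backward recursion with fuel n = number of remaining steps *)
Fixpoint Vaux (n h : nat) : S -> R :=
  match n with
  | 0 => fun _ => 0
  | n'.+1 => fun s => softV (fun b => rpi h s b + gamma * PV h (Vaux n' h.+1) s b)
  end.

Definition Vpi (h : nat) : S -> R := Vaux (H.+1 - h) h.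
Definition Qpi (h : nat) (s : S) (b : B) : R := rpi h s b + gamma * PV h (Vpi h.+1) s b.
Definition Api (h : nat) (s : S) (b : B) : R := Qpi h s b - Vpi h s.
Definition nupi (h : nat) (s : S) (b : B) : R := expR (eta * Api h s b).

Variable Qt : nat -> S -> B -> R.
Definition Vt (h : nat) (s : S) : R := if (h <= H)%N then softV (Qt h s) else 0.
Definition At (h : nat) (s : S) (b : B) : R := Qt h s b - Vt h s.
Definition nut (h : nat) (s : S) (b : B) : R := expR (eta * At h s b).

Definition KL (p q : B -> R) : R := \sum_b p b * ln (p b / q b).
Definition KLh (h : nat) (s : S) : R := KL (nupi h s) (nut h s).

(* occ h s0 b0 k s b = Pr(s_{h+k} = s, b_{h+k} = b | s_h = s0, b_h = b0)
   along a trajectory of (pi, nu^pi) on the true model *)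
Fixpoint occ (h : nat) (s0 : S) (b0 : B) (k : nat) : S -> B -> R :=
  match k with
  | 0 => fun s b => ((s == s0) && (b == b0))%:R
  | k'.+1 => fun s' b' =>
      \sum_s \sum_b occ h s0 b0 k' s b * Ppi (h + k') s b s' * nupi (h + k').+1 s' b'
  end.

(* same, conditioned only on s_h = s0 (b_h ~ nu_h^pi(.|s0)) *)
Definition occS (h : nat) (s0 : S) (k : nat) (s : S) (b : B) : R :=
  \sum_b0 nupi h s0 b0 * occ h s0 b0 k s b.

Definition Delta1 (h : nat) (s0 : S) (b0 : B) : R :=
  \sum_(h <= i < H.+1) gamma ^+ (i - h) *
     \sum_s \sum_b occ h s0 b0 (i - h) s b *
        (rpi i s b + gamma * PV i (Vt i.+1) s b - Qt i s b).

(* Delta^{(2)}_h(s_h); empty sum (= 0) for h = H+1 *)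
Definition Delta2 (h : nat) (s0 : S) : R :=
  \sum_(h <= i < H.+1) gamma ^+ (i - h) *
     \sum_s \sum_b occS h s0 (i - h) s b * KLh i s.

(* E_{s_h,b_h}[ Delta1_h(s_h,b_h) - gamma eta^{-1} Delta2_{h+1}(s_{h+1}) ] *)
Definition Ysb (h : nat) (s0 : S) (b0 : B) : R :=
  Delta1 h s0 b0 - gamma / eta * \sum_s' Ppi h s0 b0 s' * Delta2 h.+1 s'.

(* (E_{s_h,b_h} - E_{s_h}) applied to a quantity X whose conditional expectation
   given (s_h,b_h) is Y(s_h,b_h) *)
Definition Ediff (Y : B -> R) (h : nat) (s0 : S) (b0 : B) : R :=
  Y b0 - \sum_b nupi h s0 b * Y b.

End LeaderFollower.

(* Main.v *)
Require Import Defs.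
From HB Require Import structures.
From mathcomp Require Import all_boot all_order all_algebra.
From mathcomp Require Import reals sequences exp.
From mathcomp Require Import ring lra zify.
Import Order.TTheory GRing.Theory Num.Theory.
Local Open Scope ring_scope.
Set Implicit Arguments. Unset Strict Implicit. Unset Printing Implicit Defensive.

Lemma ln_expR_div (R : realType) (x y : R) : ln (expR x / expR y) = x - y.
Proof. by rewrite -expRN -expRD expRK. Qed.

Lemma sum_soft1 (R : realType) (B : finType) (eta : R) (q : B -> R) (b0 : B) :
  0 < eta -> \sum_b expR (eta * (q b - softV eta q)) = 1.
Proof.
move=> he; rewrite /softV.
have hpos : 0 < \sum_b expR (eta * q b).
  apply: (lt_le_trans (expR_gt0 (eta * q b0))).
  rewrite (bigD1 b0) //= lerDl.
  by apply: sumr_ge0 => i _; apply/ltW/expR_gt0.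
have E : forall b, expR (eta * (q b - ln (\sum_b expR (eta * q b)) / eta))
   = expR (eta * q b) / \sum_b expR (eta * q b).
  move=> b; rewrite mulrBr mulrCA divff ?gt_eqF // mulr1 expRD expRN lnK //.
under eq_bigr do rewrite E.
by rewrite -mulr_suml divff // gt_eqF.
Qed.

Lemma sum_ind2 (R : realType) (S B : finType) (s0 : S) (b0 : B) (f : S -> B -> R) :
  \sum_s \sum_b ((s == s0) && (b == b0))%:R * f s b = f s0 b0.
Proof.
rewrite (bigD1 s0) //= [X in _ + X]big1; last first.
  move=> s hs; rewrite big1 // => b _; by rewrite (negbTE hs) /= mul0r.
rewrite addr0 (bigD1 b0) //= [X in _ + X]big1; last first.
  by move=> b hb; rewrite (negbTE hb) andbF mul0r.
by rewrite !eqxx mul1r addr0.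
Qed.

Lemma sum_ind2' (R : realType) (S B : finType) (s0 : S) (b0 : B) (f : S -> B -> R) :
  \sum_s \sum_b f s b * ((s0 == s) && (b0 == b))%:R = f s0 b0.
Proof.
rewrite -(sum_ind2 s0 b0 f); apply: eq_bigr => s _; apply: eq_bigr => b _.
by rewrite mulrC (eq_sym s0) (eq_sym b0).
Qed.

Lemma exch4 (R : realType) (S B S' B' : finType) (F : S -> B -> S' -> B' -> R) :
  \sum_s \sum_b \sum_s' \sum_b' F s b s' b' = \sum_s' \sum_b' \sum_s \sum_b F s b s' b'.
Proof.
under eq_bigr do rewrite exchange_big /=.
rewrite exchange_big /=; apply: eq_bigr => s' _.
under eq_bigr do rewrite exchange_big /=.
by rewrite exchange_big.
Qed.

Lemma pull (R : realType) (T : finType) (m M : nat) (c : nat -> R) (w : T -> R)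
  (G : nat -> T -> R) :
  \sum_(m <= i < M) c i * (\sum_t w t * G i t) = \sum_t w t * \sum_(m <= i < M) c i * G i t.
Proof.
under eq_bigr do rewrite mulr_sumr.
rewrite exchange_big; apply: eq_bigr => t _; rewrite mulr_sumr; apply: eq_bigr => i _.
ring.
Qed.

Section Main.
Variables (R : realType) (S A B : finType) (H : nat)
  (P : nat -> S -> A -> B -> S -> R) (r : nat -> S -> A -> B -> R)
  (pi : nat -> S -> B -> A -> R) (eta gamma : R) (Qt : nat -> S -> B -> R).
Hypothesis he : 0 < eta.

Local Notation nu := (nupi H P r pi eta gamma).
Local Notation Pp := (Ppi P pi).
Local Notation Q := (Qpi H P r pi eta gamma).
Local Notation V := (Vpi H P r pi eta gamma).
Local Notation oc := (occ H P r pi eta gamma).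
Local Notation VT := (Vt H eta Qt).
Local Notation KLH := (KLh H P r pi eta gamma Qt).

Lemma occS_def k h s0 b0 x y : oc h s0 b0 k.+1 x y =
  \sum_s \sum_b oc h s0 b0 k s b * Pp (h + k) s b x * nu (h + k).+1 x y.
Proof. by []. Qed.

Lemma occ_first k h s0 b0 x y : oc h s0 b0 k.+1 x y =
  \sum_s' \sum_b' Pp h s0 b0 s' * nu h.+1 s' b' * oc h.+1 s' b' k x y.
Proof.
elim: k x y => [|k IH] x y.
  rewrite /=.
  under eq_bigr do under eq_bigr do rewrite -mulrA.
  by rewrite sum_ind2 sum_ind2' addn0.
rewrite occS_def.
under eq_bigr do under eq_bigr do rewrite IH mulr_suml mulr_suml.
under eq_bigr do under eq_bigr do under eq_bigr do rewrite mulr_suml mulr_suml.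
rewrite exch4; apply: eq_bigr => s' _; apply: eq_bigr => b' _.
rewrite occS_def mulr_sumr; apply: eq_bigr => s _; rewrite mulr_sumr; apply: eq_bigr => b _.
rewrite addnS addSn; ring.
Qed.


Definition EE k h s0 b0 (f : S -> B -> R) := \sum_s \sum_b oc h s0 b0 k s b * f s b.

Lemma EE0 h s0 b0 f : EE 0 h s0 b0 f = f s0 b0.
Proof. exact: sum_ind2. Qed.

Lemma EE_first k h s0 b0 f : EE k.+1 h s0 b0 f =
  \sum_s' Pp h s0 b0 s' * \sum_b' nu h.+1 s' b' * EE k h.+1 s' b' f.
Proof.
rewrite /EE.
under eq_bigr do under eq_bigr do rewrite occ_first mulr_suml.
under eq_bigr do under eq_bigr do under eq_bigr do rewrite mulr_suml.
rewrite exch4; apply: eq_bigr => s' _; rewrite mulr_sumr; apply: eq_bigr => b' _.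
rewrite !mulr_sumr; apply: eq_bigr => s _; rewrite !mulr_sumr; apply: eq_bigr => b _.
ring.
Qed.

Lemma occS_E h s0 k (f : S -> B -> R) :
  \sum_s \sum_b occS H P r pi eta gamma h s0 k s b * f s b =
  \sum_b0 nu h s0 b0 * EE k h s0 b0 f.
Proof.
rewrite /occS /EE.
under eq_bigr do under eq_bigr do rewrite mulr_suml.
under eq_bigr do rewrite exchange_big /=.
rewrite exchange_big /=; apply: eq_bigr => b0 _.
rewrite mulr_sumr; apply: eq_bigr => s _; rewrite mulr_sumr; apply: eq_bigr => b _.
ring.
Qed.

Definition dl i s b := rpi r pi i s b + gamma * PV P pi i (VT i.+1) s b - Qt i s b.

Lemma Delta1E h s0 b0 : Delta1 H P r pi eta gamma Qt h s0 b0 =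
  \sum_(h <= i < H.+1) gamma ^+ (i - h) * EE (i - h) h s0 b0 (dl i).
Proof. by []. Qed.

Lemma Delta2E h s0 : Delta2 H P r pi eta gamma Qt h s0 =
  \sum_(h <= i < H.+1) gamma ^+ (i - h) *
     \sum_b0 nu h s0 b0 * EE (i - h) h s0 b0 (fun s _ => KLH i s).
Proof. by rewrite /Delta2; apply: eq_bigr => i _; rewrite occS_E. Qed.


Lemma Vpi_eq h s : (h <= H)%N -> V h s = softV eta (fun b => Q h s b).
Proof. by move=> hH; rewrite /Vpi /Qpi subSn //= /Vpi subSS. Qed.

Lemma Vpi_end s : V H.+1 s = 0.
Proof. by rewrite /Vpi subnn. Qed.

Lemma Vt_end s : VT H.+1 s = 0.
Proof. by rewrite /Vt ltnn. Qed.

Lemma nu_sum1 h s (b0 : B) : (h <= H)%N -> \sum_b nu h s b = 1.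
Proof.
move=> hH; rewrite /nupi /Api Vpi_eq //.
exact: (sum_soft1 (fun b => Q h s b) b0 he).
Qed.

Lemma Delta1_rec h s0 b0 : (h <= H)%N ->
  Delta1 H P r pi eta gamma Qt h s0 b0 = dl h s0 b0 + gamma *
    \sum_s' Pp h s0 b0 s' * \sum_b' nu h.+1 s' b' * Delta1 H P r pi eta gamma Qt h.+1 s' b'.
Proof.
move=> hH.
rewrite Delta1E big_ltn ?ltnS // subnn expr0 mul1r EE0; congr (_ + _).
rewrite (eq_big_nat _ _ (F2 := fun i => gamma * (gamma ^+ (i - h.+1) *
   \sum_s' Pp h s0 b0 s' * \sum_b' nu h.+1 s' b' * EE (i - h.+1) h.+1 s' b' (dl i)))); last first.
  move=> i /andP[hi _]; have -> : (i - h = (i - h.+1).+1)%N by lia.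
  by rewrite EE_first exprS -mulrA.
rewrite -mulr_sumr; congr (_ * _).
rewrite pull; apply: eq_bigr => s' _; congr (_ * _).
rewrite pull; apply: eq_bigr => b' _; congr (_ * _).
Qed.

Lemma Delta2_rec h s0 (b1 : B) : (h <= H)%N ->
  Delta2 H P r pi eta gamma Qt h s0 = KLH h s0 + gamma *
    \sum_b nu h s0 b * \sum_s' Pp h s0 b s' * Delta2 H P r pi eta gamma Qt h.+1 s'.
Proof.
move=> hH.
rewrite Delta2E big_ltn ?ltnS // subnn expr0 mul1r; congr (_ + _).
  under eq_bigr do rewrite EE0.
  by rewrite -mulr_suml (nu_sum1 _ b1) // mul1r.
rewrite (eq_big_nat _ _ (F2 := fun i => gamma * (gamma ^+ (i - h.+1) *
   \sum_b nu h s0 b * \sum_s' Pp h s0 b s' * \sum_b' nu h.+1 s' b' *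
     EE (i - h.+1) h.+1 s' b' (fun s _ => KLH i s)))); last first.
  move=> i /andP[hi _]; have -> : (i - h = (i - h.+1).+1)%N by lia.
  rewrite exprS -mulrA; congr (_ * (_ * _)); apply: eq_bigr => b _.
  by rewrite EE_first.
rewrite -mulr_sumr; congr (_ * _).
rewrite pull; apply: eq_bigr => b _; congr (_ * _).
rewrite pull; apply: eq_bigr => s' _; congr (_ * _).
by rewrite Delta2E.
Qed.

Lemma ln_nu h s b : ln (nu h s b / nut H eta Qt h s b) =
  eta * Api H P r pi eta gamma h s b - eta * At H eta Qt h s b.
Proof. exact: ln_expR_div. Qed.

Lemma VmVt h s (b1 : B) : (h <= H)%N ->
  V h s - VT h s = \sum_b nu h s b * (Q h s b - Qt h s b) - KLH h s / eta.
Proof.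
move=> hH.
have KLe : KLH h s = eta * (\sum_b nu h s b * (Q h s b - Qt h s b)) - eta * (V h s - VT h s).
  rewrite /KLh /KL; under eq_bigr do rewrite ln_nu.
  rewrite (eq_bigr (fun b => eta * (nu h s b * (Q h s b - Qt h s b)) -
                         eta * (V h s - VT h s) * nu h s b)); last first.
    by move=> b _; rewrite /Api /At; ring.
  by rewrite sumrB -!mulr_sumr (nu_sum1 _ b1) // mulr1.
rewrite KLe; field; by rewrite gt_eqF.
Qed.


Lemma Drec h s b : Q h s b - Qt h s b =
  dl h s b + gamma * \sum_s' Pp h s b s' * (V h.+1 s' - VT h.+1 s').
Proof.
rewrite /Qpi /dl /PV.
have -> : \sum_s' Pp h s b s' * (V h.+1 s' - VT h.+1 s') =
  \sum_s' Pp h s b s' * V h.+1 s' - \sum_s' Pp h s b s' * VT h.+1 s'.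
  by rewrite -sumrB; apply: eq_bigr => s' _; ring.
ring.
Qed.

Lemma Yrec h s b : (h < H)%N ->
  Ysb H P r pi eta gamma Qt h s b = dl h s b + gamma * \sum_s' Pp h s b s' *
   (\sum_b' nu h.+1 s' b' * Ysb H P r pi eta gamma Qt h.+1 s' b' - KLH h.+1 s' / eta).
Proof.
move=> hH; rewrite /Ysb (Delta1_rec _ _ (ltnW hH)).
transitivity (dl h s b + \sum_s' (gamma * (Pp h s b s' * \sum_b' nu h.+1 s' b' *
        Delta1 H P r pi eta gamma Qt h.+1 s' b')
   - gamma / eta * (Pp h s b s' * (KLH h.+1 s' + gamma * \sum_b' nu h.+1 s' b' *
        \sum_s'' Pp h.+1 s' b' s'' * Delta2 H P r pi eta gamma Qt h.+2 s'')))).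
  rewrite sumrB -!mulr_sumr -addrA; congr (_ + (_ - _ * _)).
  by apply: eq_bigr => s' _; rewrite (Delta2_rec _ b hH).
rewrite mulr_sumr; congr (_ + _); apply: eq_bigr => s' _.
have -> : \sum_b' nu h.+1 s' b' * (Delta1 H P r pi eta gamma Qt h.+1 s' b' -
     gamma / eta * \sum_s'' Pp h.+1 s' b' s'' * Delta2 H P r pi eta gamma Qt h.+2 s'') =
   \sum_b' nu h.+1 s' b' * Delta1 H P r pi eta gamma Qt h.+1 s' b' - gamma / eta *
     \sum_b' nu h.+1 s' b' * \sum_s'' Pp h.+1 s' b' s'' * Delta2 H P r pi eta gamma Qt h.+2 s''.
  by rewrite mulr_sumr -sumrB; apply: eq_bigr => b' _; ring.
ring.
Qed.
Lemma DY k : forall h, (h <= H)%N -> (H - h)%N = k -> forall s b,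
  Q h s b - Qt h s b = Ysb H P r pi eta gamma Qt h s b.
Proof.
elim: k => [|k IH] h hH hk s b.
  have eh : h = H by lia.
  subst h.
  have Z1 : \sum_s' Pp H s b s' * \sum_b' nu H.+1 s' b' *
      Delta1 H P r pi eta gamma Qt H.+1 s' b' = 0.
    rewrite big1 // => s' _; rewrite big1 ?mulr0 // => b' _.
    by rewrite Delta1E big_geq ?mulr0.
  have Z2 : \sum_s' Pp H s b s' * Delta2 H P r pi eta gamma Qt H.+1 s' = 0.
    by rewrite big1 // => s' _; rewrite Delta2E big_geq ?mulr0.
  have Z3 : \sum_s' Pp H s b s' * (V H.+1 s' - VT H.+1 s') = 0.
    by rewrite big1 // => s' _; rewrite Vpi_end Vt_end subrr mulr0.
  rewrite Drec /Ysb (Delta1_rec _ _ (leqnn H)) Z1 Z2 Z3; ring.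
have hlt : (h < H)%N by lia.
rewrite Drec Yrec //; congr (_ + _ * _); apply: eq_bigr => s' _; congr (_ * _).
rewrite (VmVt _ b hlt); congr (_ - _); apply: eq_bigr => b' _.
rewrite (IH h.+1) //; lia.
Qed.

Lemma DY' h s b : (h <= H)%N -> Q h s b - Qt h s b = Ysb H P r pi eta gamma Qt h s b.
Proof. by move=> hH; apply: (DY hH (erefl _)). Qed.

Lemma part1 h s b : (h <= H)%N ->
  Api H P r pi eta gamma h s b - At H eta Qt h s b =
       Ediff H P r pi eta gamma (fun b' => Ysb H P r pi eta gamma Qt h s b') h s b
       + KLH h s / eta.
Proof.
move=> hH.
have eY : forall b', Ysb H P r pi eta gamma Qt h s b' = Q h s b' - Qt h s b'.
  by move=> b'; rewrite DY'.
rewrite /Api /At /Ediff /= eY; under eq_bigr do rewrite eY.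
have -> : KLH h s / eta = \sum_b nu h s b * (Q h s b - Qt h s b) - (V h s - VT h s).
  by rewrite (VmVt _ b) //; ring.
ring.
Qed.

Lemma part2 h s : KLH h s = eta * \sum_b nu h s b *
     (Api H P r pi eta gamma h s b - At H eta Qt h s b).
Proof.
rewrite /KLh /KL mulr_sumr; apply: eq_bigr => b _; rewrite ln_nu; ring.
Qed.
End Main.

Theorem mainTheorem13 (R : realType) (S A B : finType) (H : nat)
  (P : nat -> S -> A -> B -> S -> R) (r : nat -> S -> A -> B -> R)
  (pi : nat -> S -> B -> A -> R) (eta gamma : R) (Qt : nat -> S -> B -> R) :
  0 < eta -> 0 <= gamma <= 1 ->
  (forall h s a b s', 0 <= P h s a b s') ->
  (forall h s a b, \sum_s' P h s a b s' = 1) ->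
  (forall h s b a, 0 <= pi h s b a) ->
  (forall h s b, \sum_a pi h s b a = 1) ->
  (forall (h : nat) (s : S) (b : B), (0 < h <= H)%N ->
     Api H P r pi eta gamma h s b - At H eta Qt h s b =
       Ediff H P r pi eta gamma
         (fun b' => Ysb H P r pi eta gamma Qt h s b') h s b
       + KLh H P r pi eta gamma Qt h s / eta)
  /\
  (forall (h : nat) (s : S), (0 < h <= H)%N ->
     KLh H P r pi eta gamma Qt h s =
       eta * \sum_b nupi H P r pi eta gamma h s b *
               (Api H P r pi eta gamma h s b - At H eta Qt h s b))
  /\
  (gamma = 0 ->
   forall rt : nat -> S -> A -> B -> R,
   (forall (h : nat) (s : S) (b : B), (0 < h <= H)%N -> Qt h s b = rew_pi pi rt h s b) ->
   forall (h : nat) (s : S) (b : B), (0 < h <= H)%N ->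
     Api H P r pi eta gamma h s b - At H eta Qt h s b =
       Ediff H P r pi eta gamma
         (fun b' => rpi r pi h s b' - rew_pi pi rt h s b') h s b
       + KLh H P r pi eta gamma Qt h s / eta).

Proof.
move=> he _ _ _ _ _; split; [|split].
- move=> h s b /andP[_ hH]; exact: part1.
- move=> h s _; exact: part2.
- move=> g0 rt hQ h s b hh.
  have hH : (h <= H)%N by case/andP: hh.
  rewrite part1 //; congr (_ + _).
  have eY : forall b', Ysb H P r pi eta gamma Qt h s b' =
     rpi r pi h s b' - rew_pi pi rt h s b'.
    move=> b'; rewrite -DY' // /Qpi g0 mul0r addr0 hQ //.
  by rewrite /Ediff /= eY; under eq_bigr do rewrite eY.
Qed.
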